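(* Let $0<p<1/2$, let $m$ be a bounded generating sequence, and let $\varphi:\mathbb{N}\to[1,\infty)$ be a nondecreasing function such that $$\limsup_{n\to\infty}\frac{(n+1)^{1/p-2}}{\varphi(n)}=+\infty.$$ Then $$\sup_{f\in H_p(G_m),\ \|f\|_{H_p}\le 1}\ \sup_{n\in\mathbb{N}_+}\Big\|\frac{\sigma_nf}{\varphi(n)}\Big\|_{L_{p,\infty}(G_m)}=\infty .$$ In particular the maximal operator $f\mapsto\sup_{n}|\sigma_nf|/\varphi(n)$ is not bounded from $H_p(G_m)$ to $L_{p,\infty}(G_m)$.
   Context: Let $m=(m_0,m_1,\dots)$ be a sequence of integers $m_k\ge 2$ with $\sup_k m_k<\infty$ (bounded Vilenkin group). $Z_{m_k}=\{0,1,\dots,m_k-1\}$ is the additive group of integers mod $m_k$, and $G_m=\prod_k Z_{m_k}$ is the complete direct product, with elements $x=(x_0,x_1,\dots)$, $x_k\in Z_{m_k}$, product topology, and Haar measure $\mu$ = product of the uniform measures $\mu_k(\{j\})=1/m_k$. Set $M_0=1$, $M_{k+1}=m_kM_k$; every $n\in\mathbb{N}$ is uniquely $n=\sum_j n_jM_j$ with $n_j\in Z_{m_j}$. For $n\ge1$, $I_n(x)=\{y\in G_m: y_j=x_j,\ j<n\}$, $I_0(x)=G_m$. The generalized Rademacher functions are $r_k(x)=\exp(2\pi i x_k/m_k)$ and the Vilenkin system is $\psi_n=\prod_k r_k^{n_k}$. $\digamma_n$ is the $\sigma$-algebra generated by the intervals $I_n(x)$. A martingale $f=(f^{(n)})$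 is with respect to $(\digamma_n)$; $f^*=\sup_n|f^{(n)}|$, and $H_p(G_m)$ consists of martingales with $\|f\|_{H_p}:=\|f^*\|_{L_p}<\infty$. Fourier coefficients of a martingale are $\widehat f(i)=\lim_{k\to\infty}\int_{G_m}f^{(k)}\overline{\psi_i}\,d\mu$; $S_nf=\sum_{k=0}^{n-1}\widehat f(k)\psi_k$ ($S_0f=0$), $\sigma_nf=\frac1n\sum_{k=0}^{n-1}S_kf$. The weak space $L_{p,\infty}(G_m)$ has quasinorm $\|g\|_{L_{p,\infty}}=\big(\sup_{\lambda>0}\lambda^p\mu(|g|>\lambda)\big)^{1/p}$. *)

(* Defs.v *)
(* Vilenkin groups encoded concretely via finite-level cylinder sums. *)
From Stdlib Require Import Reals Lra Lia Arith.
Open Scope R_scope.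

Definition Cx := (R * R)%type.
Definition C0 : Cx := (0, 0).
Definition C1 : Cx := (1, 0).
Definition Cadd (z w : Cx) : Cx := (fst z + fst w, snd z + snd w).
Definition Cmul (z w : Cx) : Cx :=
  (fst z * fst w - snd z * snd w, fst z * snd w + snd z * fst w).
Definition Cconj (z : Cx) : Cx := (fst z, - snd z).
Definition Cscal (a : R) (z : Cx) : Cx := (a * fst z, a * snd z).
Definition Cabs (z : Cx) : R := sqrt (fst z ^ 2 + snd z ^ 2).
Definition Cexpi (t : R) : Cx := (cos t, sin t).

Fixpoint Csum (n : nat) (g : nat -> Cx) : Cx :=
  match n with O => C0 | S k => Cadd (Csum k g) (g k) end.
Fixpoint Cprod (n : nat) (g : nat -> Cx) : Cx :=
  match n with O => C1 | S k => Cmul (Cprod k g) (g k) end.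
Fixpoint Cpow (z : Cx) (n : nat) : Cx :=
  match n with O => C1 | S k => Cmul (Cpow z k) z end.
Fixpoint Rsum (n : nat) (g : nat -> R) : R :=
  match n with O => 0 | S k => Rsum k g + g k end.
Fixpoint natprod (n : nat) (g : nat -> nat) : nat :=
  match n with O => 1%nat | S k => (natprod k g * g k)%nat end.
Fixpoint Rmaxupto (N : nat) (g : nat -> R) : R :=
  match N with O => g O | S k => Rmax (Rmaxupto k g) (g (S k)) end.

Definition rpow (x p : R) : R := if Rle_dec x 0 then 0 else Rpower x p.

Definition bounded_generating (m : nat -> nat) : Prop :=
  (forall k, (2 <= m k)%nat) /\ (exists B, forall k, (m k <= B)%nat).

Definition Mk (m : nat -> nat) (k : nat) : nat := natprod k m.

(* n_j in n = sum_j n_j M_j *)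
Definition digit (m : nat -> nat) (n j : nat) : nat :=
  Nat.modulo (Nat.div n (Mk m j)) (m j).

(* elements of G_m: sequences x with x_k in Z_{m_k} *)
Definition Gpoint (m : nat -> nat) (x : nat -> nat) : Prop := forall k, (x k < m k)%nat.

Definition rad (m : nat -> nat) (k : nat) (x : nat -> nat) : Cx :=
  Cexpi (2 * PI * INR (x k) / INR (m k)).
(* psi_n = prod_k r_k^{n_k}; n_k = 0 for k > n since M_k >= 2^k *)
Definition psi (m : nat -> nat) (n : nat) (x : nat -> nat) : Cx :=
  Cprod (S n) (fun k => Cpow (rad m k x) (digit m n k)).

(* the point of G_m whose coordinates are the digits of i; for i < M_N
   these run over the representatives of the cosets I_N *)
Definition pt (m : nat -> nat) (i : nat) : nat -> nat := fun k => digit m i k.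

Definition measurable_at {A : Type} (m : nat -> nat) (N : nat) (g : (nat -> nat) -> A) : Prop :=
  forall x y, Gpoint m x -> Gpoint m y -> (forall k, (k < N)%nat -> x k = y k) -> g x = g y.

(* Haar integral of an F_N-measurable function *)
Definition lint (m : nat -> nat) (N : nat) (g : (nat -> nat) -> R) : R :=
  Rsum (Mk m N) (fun i => g (pt m i)) / INR (Mk m N).
Definition Cint (m : nat -> nat) (N : nat) (g : (nat -> nat) -> Cx) : Cx :=
  Cscal (/ INR (Mk m N)) (Csum (Mk m N) (fun i => g (pt m i))).
(* Haar measure of {h > lam} for an F_N-measurable real h *)
Definition mu_gt (m : nat -> nat) (N : nat) (h : (nat -> nat) -> R) (lam : R) : R :=
  Rsum (Mk m N) (fun i => if Rlt_dec lam (h (pt m i)) then 1 else 0) / INR (Mk m N).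

Definition upd (x : nat -> nat) (n j : nat) : nat -> nat :=
  fun k => if Nat.eqb k n then j else x k.

Definition martingale (m : nat -> nat) (f : nat -> (nat -> nat) -> Cx) : Prop :=
  (forall n, measurable_at m n (f n)) /\
  (forall n x, Gpoint m x ->
     f n x = Cscal (/ INR (m n)) (Csum (m n) (fun j => f (S n) (upd x n j)))).

(* ||f||_{H_p} <= B  <->  int (fstar)^p <= B^p, and by monotone convergence
   int (sup_n |f^(n)|)^p = sup_N int (max_{n<=N} |f^(n)|)^p *)
Definition Hp_norm_le (m : nat -> nat) (p : R) (f : nat -> (nat -> nat) -> Cx) (B : R) : Prop :=
  forall N, lint m N (fun x => rpow (Rmaxupto N (fun n => Cabs (f n x))) p) <= rpow B p.

(* Fourier coefficients: lim_k int f^(k) conj(psi_i); the sequence is constant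
   for k >= i+1 (martingale property, psi_i is F_{i+1}-measurable) *)
Definition fhat (m : nat -> nat) (f : nat -> (nat -> nat) -> Cx) (i : nat) : Cx :=
  Cint m (S i) (fun x => Cmul (f (S i) x) (Cconj (psi m i x))).

Definition Spart (m : nat -> nat) (f : nat -> (nat -> nat) -> Cx) (n : nat) (x : nat -> nat) : Cx :=
  Csum n (fun k => Cmul (fhat m f k) (psi m k x)).

Definition Fsigma (m : nat -> nat) (f : nat -> (nat -> nat) -> Cx) (n : nat) (x : nat -> nat) : Cx :=
  Cscal (/ INR n) (Csum n (fun k => Spart m f k x)).

(* ||h||_{L_{p,oo}} > B (B > 0) for an F_N-measurable h :
   sup_{lam>0} lam^p mu(|h| > lam) > B^p *)
Definition weak_norm_gt (m : nat -> nat) (p : R) (N : nat) (h : (nat -> nat) -> R) (B : R) : Prop :=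
  exists lam, 0 < lam /\ rpow lam p * mu_gt m N (fun x => Rabs (h x)) lam > rpow B p.

(* Main.v *)
Require Import Defs.
From Stdlib Require Import Reals Lra Lia Arith.
Open Scope R_scope.

Lemma Cext (z w : Cx) : fst z = fst w -> snd z = snd w -> z = w.
Proof. apply injective_projections. Qed.

Lemma Csum_fst n g : fst (Csum n g) = Rsum n (fun k => fst (g k)).
Proof. induction n; simpl; [reflexivity| rewrite IHn; reflexivity]. Qed.
Lemma Csum_snd n g : snd (Csum n g) = Rsum n (fun k => snd (g k)).
Proof. induction n; simpl; [reflexivity| rewrite IHn; reflexivity]. Qed.

Lemma Rsum_ext n f g : (forall k, (k < n)%nat -> f k = g k) -> Rsum n f = Rsum n g.
Proof. induction n; intros H; simpl; [reflexivity|]. rewrite IHn by (intros; apply H; lia).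
 rewrite H by lia; reflexivity. Qed.

Lemma Rsum_plus n k g : Rsum (n + k) g = Rsum n g + Rsum k (fun j => g (n + j)%nat).
Proof. induction k; simpl. rewrite Nat.add_0_r; ring.
 rewrite Nat.add_succ_r; simpl. rewrite IHk; ring. Qed.

Lemma Rsum_const n a : Rsum n (fun _ => a) = INR n * a.
Proof. induction n; simpl Rsum. simpl; ring. rewrite IHn, S_INR; ring. Qed.

Lemma Rsum_scal n a g : Rsum n (fun k => a * g k) = a * Rsum n g.
Proof. induction n; simpl; [ring| rewrite IHn; ring]. Qed.

Lemma Rsum_zero n g : (forall k, (k < n)%nat -> g k = 0) -> Rsum n g = 0.
Proof. intros H; rewrite (Rsum_ext n g (fun _ => 0)) by auto. rewrite Rsum_const; ring. Qed.

Lemma Rsum_double a b F :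
  Rsum (b * a) F = Rsum b (fun d => Rsum a (fun r => F (d * a + r)%nat)).
Proof. induction b; simpl; [reflexivity|].
 rewrite Nat.add_comm, Rsum_plus, IHb. reflexivity. Qed.

Lemma Rsum_ind0 n v : (0 < n)%nat -> Rsum n (fun r => if Nat.eqb r 0 then v else 0) = v.
Proof. intros H. destruct n; [lia|]. replace (S n) with (1 + n)%nat by lia.
 rewrite Rsum_plus. simpl. rewrite Rsum_zero. ring. intros k _. reflexivity. Qed.

Lemma Cabs_mul z w : Cabs (Cmul z w) = Cabs z * Cabs w.
Proof. destruct z as [a b], w as [c d]; unfold Cabs, Cmul; simpl.
 rewrite <- sqrt_mult by nra. f_equal; ring. Qed.
Lemma Cabs_scal a z : Cabs (Cscal a z) = Rabs a * Cabs z.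
Proof. destruct z as [x y]; unfold Cabs, Cscal; simpl.
 rewrite <- sqrt_Rsqr_abs, <- sqrt_mult by (unfold Rsqr; nra). f_equal; unfold Rsqr; ring. Qed.
Lemma Cabs_expi t : Cabs (Cexpi t) = 1.
Proof. unfold Cabs, Cexpi; simpl fst; simpl snd.
 pose proof (sin2_cos2 t). unfold Rsqr in H.
 replace (cos t ^ 2 + sin t ^ 2) with 1 by (rewrite <- H; ring). apply sqrt_1. Qed.
Lemma Cabs_C1 : Cabs Defs.C1 = 1.
Proof. unfold Cabs, Defs.C1; simpl fst; simpl snd. replace (1 ^ 2 + 0 ^ 2) with 1 by ring. apply sqrt_1. Qed.
Lemma Cabs_C0 : Cabs C0 = 0.
Proof. unfold Cabs, C0; simpl fst; simpl snd. replace (0 ^ 2 + 0 ^ 2) with 0 by ring. apply sqrt_0. Qed.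
Lemma Cabs_real r : Cabs (r, 0) = Rabs r.
Proof. unfold Cabs; simpl. rewrite <- sqrt_Rsqr_abs; f_equal; unfold Rsqr; ring. Qed.
Lemma Cabs_ge_fst z : Rabs (fst z) <= Cabs z.
Proof. destruct z as [a b]; unfold Cabs; simpl. rewrite <- sqrt_Rsqr_abs.
 apply sqrt_le_1_alt. unfold Rsqr; nra. Qed.
Lemma Cabs_pow z n : Cabs (Cpow z n) = Cabs z ^ n.
Proof. induction n; simpl. apply Cabs_C1. rewrite Cabs_mul, IHn; ring. Qed.
Lemma Cabs_prod n g : (forall k, Cabs (g k) = 1) -> Cabs (Cprod n g) = 1.
Proof. intros H; induction n; simpl. apply Cabs_C1. rewrite Cabs_mul, IHn, H; ring. Qed.
Lemma Cabs_psi m n x : Cabs (psi m n x) = 1.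
Proof. unfold psi. apply Cabs_prod. intros k. rewrite Cabs_pow. unfold rad.
 rewrite Cabs_expi. apply pow1. Qed.

Lemma Cmul_C1_l z : Cmul Defs.C1 z = z.
Proof. apply Cext; unfold Cmul, Defs.C1; simpl; ring. Qed.
Lemma Cmul_C1_r z : Cmul z Defs.C1 = z.
Proof. apply Cext; unfold Cmul, Defs.C1; simpl; ring. Qed.
Lemma Cmul_C0_l z : Cmul C0 z = C0.
Proof. apply Cext; unfold Cmul, C0; simpl; ring. Qed.
Lemma Cadd_C0_l z : Cadd C0 z = z.
Proof. apply Cext; unfold Cadd, C0; simpl; ring. Qed.
Lemma Cpow_C1 n : Cpow Defs.C1 n = Defs.C1.
Proof. induction n; simpl; [reflexivity| rewrite IHn; apply Cmul_C1_l]. Qed.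
Lemma Cpow_1 z : Cpow z 1 = z.
Proof. simpl. apply Cmul_C1_l. Qed.
Lemma Csum_C0 n g : (forall k, (k < n)%nat -> g k = C0) -> Csum n g = C0.
Proof. intros H; induction n; simpl; [reflexivity|]. rewrite IHn by (intros; apply H; lia).
 rewrite H by lia. apply Cadd_C0_l. Qed.
Lemma Rpower_1_base p : Rpower 1 p = 1.
Proof. unfold Rpower. rewrite ln_1, Rmult_0_r. apply exp_0. Qed.

Fixpoint allz (N : nat) (x : nat -> nat) : bool :=
  match N with O => true | S k => allz k x && Nat.eqb (x k) 0 end.

Section Nat.
Variable m : nat -> nat.
Hypothesis hm : forall k, (2 <= m k)%nat.

Lemma Mk_S k : Mk m (S k) = (Mk m k * m k)%nat.
Proof. reflexivity. Qed.
Lemma Mk_ge k : (k + 1 <= Mk m k)%nat.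
Proof. induction k. simpl. unfold Mk; simpl; lia. rewrite Mk_S. pose proof (hm k). nia. Qed.
Lemma Mk_pos k : (0 < Mk m k)%nat.
Proof. pose proof (Mk_ge k); lia. Qed.
Lemma Mk_split a t : Mk m (a + t) = (Mk m a * natprod t (fun j => m (a + j)%nat))%nat.
Proof. induction t. rewrite Nat.add_0_r; simpl; lia.
 rewrite Nat.add_succ_r, Mk_S, IHt. simpl. lia. Qed.
Lemma natprod_pos t g : (forall j, (0 < g j)%nat) -> (0 < natprod t g)%nat.
Proof. intros H; induction t; simpl; [lia|]. specialize (H t). nia. Qed.
Lemma Mk_mono a b : (a <= b)%nat -> (Mk m a <= Mk m b)%nat.
Proof. intros H. replace b with (a + (b - a))%nat by lia. rewrite Mk_split.
 pose proof (natprod_pos (b - a) (fun j => m (a + j)%nat) ltac:(intros; pose proof (hm (a+j)); lia)). nia. Qed.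
Lemma Mk_lt a b : (a < b)%nat -> (Mk m a < Mk m b)%nat.
Proof. intros H. pose proof (Mk_mono (S a) b H). rewrite Mk_S in H0.
 pose proof (hm a); pose proof (Mk_pos a). nia. Qed.

Lemma allz_pt N i : allz N (pt m i) = Nat.eqb (i mod Mk m N) 0.
Proof. induction N. reflexivity.
 simpl allz. rewrite IHN. rewrite Mk_S. unfold pt, digit.
 rewrite Nat.Div0.mod_mul_r by (pose proof (Mk_pos N); pose proof (hm N); lia).
 destruct (Nat.eqb_spec (i mod Mk m N) 0); destruct (Nat.eqb_spec ((i / Mk m N) mod m N) 0);
 simpl; symmetry; apply Nat.eqb_eq || apply Nat.eqb_neq; pose proof (Mk_pos N); nia. Qed.
Lemma allz_spec N x : allz N x = true -> forall j, (j < N)%nat -> x j = 0%nat.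
Proof. induction N; simpl; intros H j Hj; [lia|]. apply andb_prop in H as [H1 H2].
 apply Nat.eqb_eq in H2. destruct (Nat.eq_dec j N); [subst; auto| apply IHN; auto; lia]. Qed.
Lemma allz_ext N x y : (forall j, (j < N)%nat -> x j = y j) -> allz N x = allz N y.
Proof. induction N; simpl; intros H; auto. rewrite IHN by (intros; apply H; lia).
 rewrite H by lia. reflexivity. Qed.

Lemma decomp_mod N q d r : (r < Mk m N)%nat -> ((q * m N + d) * Mk m N + r) mod Mk m N = r.
Proof. intros H. rewrite Nat.add_comm, Nat.Div0.mod_add. apply Nat.mod_small; auto. Qed.
Lemma decomp_digit N q d r : (r < Mk m N)%nat -> (d < m N)%nat ->
  digit m ((q * m N + d) * Mk m N + r) N = d.
Proof. intros H Hd. unfold digit. rewrite Nat.add_comm, Nat.div_add by (pose proof (Mk_pos N); lia).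
 rewrite Nat.div_small by auto. simpl. rewrite Nat.add_comm, Nat.Div0.mod_add. apply Nat.mod_small; auto. Qed.
End Nat.

Definition hval (d : nat) : R := match d with O => 1 | S O => -1 | _ => 0 end.
Definition gr (m : nat -> nat) (N : nat) (c : R) (x : nat -> nat) : R :=
  if allz N x then c * hval (x N) else 0.
Definition fm (m : nat -> nat) (N : nat) (c : R) (n : nat) (x : nat -> nat) : Cx :=
  if Nat.ltb N n then (gr m N c x, 0) else C0.

Lemma Rsum_two n F : (2 <= n)%nat -> (forall d, (2 <= d)%nat -> F d = 0) -> Rsum n F = F 0%nat + F 1%nat.
Proof. intros Hn HF. replace n with (2 + (n - 2))%nat by lia. rewrite Rsum_plus.
 rewrite (Rsum_zero (n-2)) by (intros; apply HF; lia). simpl. ring. Qed.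

Section Constr.
Variable m : nat -> nat.
Hypothesis hm : forall k, (2 <= m k)%nat.

Lemma key_sum N K Phi : (N < K)%nat -> exists P, (0 < P)%nat /\
  Mk m K = (P * m N * Mk m N)%nat /\
  Rsum (Mk m K) (fun i => if Nat.eqb (i mod Mk m N) 0 then Phi (digit m i N) else 0)
   = INR P * Rsum (m N) Phi.
Proof. intros H. set (P := natprod (K - S N) (fun j => m (S N + j)%nat)).
 assert (HK : Mk m K = (P * m N * Mk m N)%nat).
 { replace K with (S N + (K - S N))%nat at 1 by lia. rewrite Mk_split by auto. rewrite Mk_S. unfold P. lia. }
 exists P. split. apply natprod_pos. intros; pose proof (hm (S N + j)); lia. split; auto.
 rewrite HK, Rsum_double, Rsum_double. rewrite <- (Rsum_const P (Rsum (m N) Phi)).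
 apply Rsum_ext; intros q Hq. apply Rsum_ext; intros d Hd.
 pose proof (Mk_pos m hm N) as HM.
 rewrite (Rsum_ext _ _ (fun r => if Nat.eqb r 0 then Phi d else 0)).
 apply Rsum_ind0; auto.
 intros r Hr. rewrite decomp_mod by auto. rewrite decomp_digit by auto. reflexivity. Qed.

Lemma fm_meas N c n : measurable_at m n (fm m N c n).
Proof. intros x y Hx Hy Hxy. unfold fm. destruct (Nat.ltb_spec N n); auto.
 unfold gr. rewrite (allz_ext N x y) by (intros; apply Hxy; lia). rewrite Hxy by lia. reflexivity. Qed.

Lemma Cscal_avg_const (a : nat) z : (0 < a)%nat -> Cscal (/ INR a) (Csum a (fun _ => z)) = z.
Proof. intros Ha. assert (INR a <> 0) by (apply not_0_INR; lia). apply Cext; unfold Cscal; simpl;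
 rewrite ?Csum_fst, ?Csum_snd, Rsum_const; field; auto. Qed.

Lemma fm_mart N c : martingale m (fm m N c).
Proof. split. intros n; apply fm_meas. intros n x Hx.
 destruct (lt_eq_lt_dec n N) as [[Hl|He]|Hg].
 - unfold fm. destruct (Nat.ltb_spec N n); [lia|]. destruct (Nat.ltb_spec N (S n)); [lia|].
   rewrite Cscal_avg_const; auto. pose proof (hm n); lia.
 - subst. unfold fm. destruct (Nat.ltb_spec N N); [lia|]. destruct (Nat.ltb_spec N (S N)); [|lia].
   apply Cext; unfold Cscal; simpl; rewrite ?Csum_fst, ?Csum_snd; simpl.
   + rewrite (Rsum_two (m N)). unfold gr. rewrite !(allz_ext N (upd x N _) x).
     unfold upd; rewrite Nat.eqb_refl; simpl. destruct (allz N x); ring.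
     intros j Hj; unfold upd; destruct (Nat.eqb_spec j N); auto; lia.
     intros j Hj; unfold upd; destruct (Nat.eqb_spec j N); auto; lia.
     apply hm. intros d Hd. unfold gr. unfold upd; rewrite Nat.eqb_refl.
     destruct d as [|[|d]]; try lia. simpl. destruct allz; ring.
   + rewrite Rsum_zero; auto; ring.
 - unfold fm. destruct (Nat.ltb_spec N n); [|lia]. destruct (Nat.ltb_spec N (S n)); [|lia].
   assert (H1 : forall j, gr m N c (upd x n j) = gr m N c x).
   { intros j. unfold gr. rewrite (allz_ext N _ x) by (intros i Hi; unfold upd; destruct (Nat.eqb_spec i n); auto; lia).
     unfold upd. destruct (Nat.eqb_spec N n); [lia|]. reflexivity. }
   assert (INR (m n) <> 0) by (apply not_0_INR; pose proof (hm n); lia).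
   apply Cext; unfold Cscal; simpl; rewrite ?Csum_fst, ?Csum_snd; simpl.
   + rewrite (Rsum_ext _ _ (fun _ => gr m N c x)) by (intros; apply H1). rewrite Rsum_const. field; auto.
   + rewrite Rsum_zero; auto; ring.
Qed.
End Constr.

Lemma Rmaxupto_le K g a : (forall n, (n <= K)%nat -> g n <= a) -> Rmaxupto K g <= a.
Proof. induction K; intros H; simpl. apply H; lia. apply Rmax_lub. apply IHK; intros; apply H; lia. apply H; lia. Qed.
Lemma Rmaxupto_ext K g h : (forall n, (n <= K)%nat -> g n = h n) -> Rmaxupto K g = Rmaxupto K h.
Proof. induction K; intros H; simpl. apply H; lia. rewrite IHK by (intros; apply H; lia). rewrite H by lia; auto. Qed.
Lemma Rmaxupto_zero K : Rmaxupto K (fun _ => 0) = 0.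
Proof. induction K; simpl; auto. rewrite IHK. apply Rmax_left; lra. Qed.
Lemma Rmaxupto_step K N a : 0 <= a -> (N < K)%nat -> Rmaxupto K (fun n => if Nat.ltb N n then a else 0) = a.
Proof. intros Ha H. destruct K; [lia|]. simpl. destruct (Nat.ltb_spec N (S K)); [|lia].
 apply Rmax_right. apply Rmaxupto_le. intros n _. destruct (Nat.ltb N n); lra. Qed.
Lemma rpow_0 p : rpow 0 p = 0.
Proof. unfold rpow. destruct (Rle_dec 0 0); auto; lra. Qed.
Lemma rpow_1 p : rpow 1 p = 1.
Proof. unfold rpow. destruct (Rle_dec 1 0); [lra|]. apply Rpower_1_base. Qed.

Section Hp.
Variable m : nat -> nat.
Hypothesis hm : forall k, (2 <= m k)%nat.

Lemma fm_Hp N c p : 0 < c -> rpow c p = INR (Mk m N) -> Hp_norm_le m p (fm m N c) 1.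
Proof. intros Hc Hcp K. rewrite rpow_1. unfold lint.
 pose proof (Mk_pos m hm K) as HMK.
 assert (INR (Mk m K) > 0) by (apply lt_0_INR; lia).
 destruct (le_lt_dec K N) as [HK|HK].
 - rewrite Rsum_zero. unfold Rdiv; rewrite Rmult_0_l; lra.
   intros i _. rewrite (Rmaxupto_ext _ _ (fun _ => 0)). rewrite Rmaxupto_zero. apply rpow_0.
   intros n Hn. unfold fm. destruct (Nat.ltb_spec N n); [lia|]. apply Cabs_C0.
 - rewrite (Rsum_ext _ _ (fun i => if Nat.eqb (i mod Mk m N) 0 then rpow (Rabs (c * hval (digit m i N))) p else 0)).
   + destruct (key_sum m hm N K (fun d => rpow (Rabs (c * hval d)) p) HK) as [P [HP [HMK' Hs]]].
     rewrite Hs. rewrite (Rsum_two (m N)) by (auto; intros d Hd; destruct d as [|[|d]]; try lia; simpl;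
        rewrite Rmult_0_r, Rabs_R0; apply rpow_0).
     simpl hval. replace (Rabs (c * 1)) with c by (rewrite Rmult_1_r, Rabs_pos_eq; lra).
     replace (Rabs (c * -1)) with c by (replace (c * -1) with (- c) by ring; rewrite Rabs_Ropp, Rabs_pos_eq; lra).
     rewrite Hcp, HMK', !mult_INR. pose proof (hm N). pose proof (Mk_pos m hm N).
     assert (INR (m N) >= 2) by (replace 2 with (INR 2) by (simpl; ring); apply Rle_ge, le_INR; auto).
     assert (INR (Mk m N) > 0) by (apply lt_0_INR; lia). assert (INR P > 0) by (apply lt_0_INR; lia).
     replace (INR P * (INR (Mk m N) + INR (Mk m N)) / (INR P * INR (m N) * INR (Mk m N))) with (2 / INR (m N)) by (field; lra).
     unfold Rdiv; apply Rmult_le_reg_r with (INR (m N)); [lra|]. rewrite Rmult_assoc, Rinv_l; lra.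
   + intros i _. rewrite (Rmaxupto_ext _ _ (fun n => if Nat.ltb N n then Rabs (gr m N c (pt m i)) else 0)).
     rewrite Rmaxupto_step by (auto; apply Rabs_pos). unfold gr. rewrite allz_pt by auto.
     destruct (Nat.eqb (i mod Mk m N) 0). reflexivity. rewrite Rabs_R0; apply rpow_0.
     intros n _. unfold fm. destruct (Nat.ltb N n). apply Cabs_real. apply Cabs_C0.
Qed.
End Hp.

Lemma Cscal_C0 a : Cscal a C0 = C0.
Proof. apply Cext; unfold Cscal, C0; simpl; ring. Qed.

Section Fh.
Variable m : nat -> nat.
Hypothesis hm : forall k, (2 <= m k)%nat.

Lemma rad_zero j x : x j = 0%nat -> rad m j x = Defs.C1.
Proof. intros H. unfold rad. rewrite H. simpl INR. replace (2 * PI * 0 / INR (m j)) with 0 by (unfold Rdiv; ring).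
 unfold Cexpi. rewrite cos_0, sin_0. reflexivity. Qed.

Lemma Cprod_psi x k N : allz N x = true -> (forall j, (N < j)%nat -> digit m k j = 0%nat) ->
  forall n, Cprod n (fun j => Cpow (rad m j x) (digit m k j)) =
     if Nat.ltb N n then Cpow (rad m N x) (digit m k N) else Defs.C1.
Proof. intros Hx Hk n. induction n. reflexivity. simpl Cprod. rewrite IHn.
 destruct (Nat.ltb_spec N n); destruct (Nat.ltb_spec N (S n)); try lia.
 - rewrite (Hk n) by lia. simpl. rewrite !Cmul_C1_r. reflexivity.
 - assert (n = N) by lia. subst. apply Cmul_C1_l.
 - rewrite rad_zero by (apply (allz_spec N); auto; lia). rewrite Cpow_C1. apply Cmul_C1_l.
Qed.

Lemma digit_high k N j : (k <= Mk m N)%nat -> (N < j)%nat -> digit m k j = 0%nat.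
Proof. intros H1 H2. unfold digit. pose proof (Mk_lt m hm N j H2). rewrite Nat.div_small by lia. apply Nat.Div0.mod_0_l. Qed.
Lemma digit_low k N : (k < Mk m N)%nat -> digit m k N = 0%nat.
Proof. intros H. unfold digit. rewrite Nat.div_small by lia. apply Nat.Div0.mod_0_l. Qed.
Lemma digit_MN N : digit m (Mk m N) N = 1%nat.
Proof. unfold digit. rewrite Nat.div_same by (pose proof (Mk_pos m hm N); lia). apply Nat.mod_small. apply hm. Qed.

Lemma fhat_zero N c k : (k < Mk m N)%nat -> fhat m (fm m N c) k = C0.
Proof. intros Hk. unfold fhat, Cint. destruct (le_lt_dec N k) as [HNk|HNk].
 - destruct (key_sum m hm N (S k) (fun d => c * hval d) ltac:(lia)) as [P [HP [_ Hs]]].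
   rewrite (Rsum_two (m N)) in Hs by (auto; intros d Hd; destruct d as [|[|d]]; try lia; simpl; ring).
   apply Cext; unfold Cscal; cbn [fst snd]; rewrite ?Csum_fst, ?Csum_snd.
   + rewrite (Rsum_ext _ _ (fun i => if Nat.eqb (i mod Mk m N) 0 then c * hval (digit m i N) else 0)).
     rewrite Hs. simpl. ring.
     intros i _. unfold fm. destruct (Nat.ltb_spec N (S k)); [|lia]. unfold gr. rewrite allz_pt by auto.
     destruct (Nat.eqb_spec (i mod Mk m N) 0) as [E|E].
     * unfold psi. rewrite (Cprod_psi (pt m i) k N).
       destruct (Nat.ltb_spec N (S k)); [|lia]. rewrite (digit_low k N Hk). simpl. unfold pt; ring.
       rewrite allz_pt by auto. apply Nat.eqb_eq; auto.
       intros j Hj. apply (digit_high k N); auto; lia.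
     * simpl. ring.
   + rewrite Rsum_zero. unfold C0; cbn [snd]; ring. intros i _. unfold fm. destruct (Nat.ltb_spec N (S k)); [|lia]. unfold gr.
     rewrite allz_pt by auto. destruct (Nat.eqb_spec (i mod Mk m N) 0) as [E|E].
     * unfold psi. rewrite (Cprod_psi (pt m i) k N).
       destruct (Nat.ltb_spec N (S k)); [|lia]. rewrite (digit_low k N Hk). simpl. ring.
       rewrite allz_pt by auto. apply Nat.eqb_eq; auto.
       intros j Hj. apply (digit_high k N); auto; lia.
     * simpl. ring.
 - rewrite Csum_C0. apply Cscal_C0. intros i _. unfold fm. destruct (Nat.ltb_spec N (S k)); [lia|].
   apply Cmul_C0_l.
Qed.
End Fh.

Section Fh2.
Variable m : nat -> nat.
Hypothesis hm : forall k, (2 <= m k)%nat.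

Lemma fhat_MN N c : fst (fhat m (fm m N c) (Mk m N)) =
   c * (1 - cos (2 * PI / INR (m N))) / (INR (m N) * INR (Mk m N)).
Proof. unfold fhat, Cint. set (k := Mk m N).
 assert (HNk : (N < S k)%nat) by (unfold k; pose proof (Mk_ge m hm N); lia).
 destruct (key_sum m hm N (S k) (fun d => c * hval d * cos (2 * PI * INR d / INR (m N))) HNk) as [P [HP [HK Hs]]].
 rewrite (Rsum_two (m N)) in Hs by (auto; intros d Hd; destruct d as [|[|d]]; try lia; simpl; ring).
 unfold Cscal; cbn [fst]; rewrite Csum_fst.
 rewrite (Rsum_ext _ _ (fun i => if Nat.eqb (i mod Mk m N) 0 then c * hval (digit m i N) * cos (2 * PI * INR (digit m i N) / INR (m N)) else 0)).
 - rewrite Hs. rewrite HK, !mult_INR. simpl hval. simpl INR.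
   replace (2 * PI * 0 / INR (m N)) with 0 by (unfold Rdiv; ring). rewrite cos_0.
   replace (2 * PI * 1 / INR (m N)) with (2 * PI / INR (m N)) by (unfold Rdiv; ring).
   pose proof (hm N). pose proof (Mk_pos m hm N).
   assert (INR (m N) > 0) by (apply lt_0_INR; lia).
   assert (INR (Mk m N) > 0) by (apply lt_0_INR; lia). assert (INR P > 0) by (apply lt_0_INR; lia).
   unfold k. field. lra.
 - intros i _. unfold fm. destruct (Nat.ltb_spec N (S k)); [|lia]. unfold gr. rewrite allz_pt by auto.
   destruct (Nat.eqb_spec (i mod Mk m N) 0) as [E|E].
   + unfold psi. rewrite (Cprod_psi m (pt m i) k N).
     destruct (Nat.ltb_spec N (S k)); [|lia]. unfold k. rewrite (digit_MN m hm N). rewrite Cpow_1.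
     unfold rad, Cexpi, Cconj, Cmul. cbn [fst snd]. unfold pt. ring.
     rewrite allz_pt by auto. apply Nat.eqb_eq; auto.
     intros j Hj. apply (digit_high m hm k N); unfold k; auto; lia.
   + simpl. ring.
Qed.
End Fh2.

Lemma Fsigma_val m (hm : forall k, (2 <= m k)%nat) N c x :
  Cabs (Fsigma m (fm m N c) (Mk m N + 2) x) = Cabs (fhat m (fm m N c) (Mk m N)) / INR (Mk m N + 2).
Proof.
 assert (HS : forall k, (k <= Mk m N)%nat -> Spart m (fm m N c) k x = C0).
 { intros k Hk. unfold Spart. apply Csum_C0. intros j Hj. rewrite (fhat_zero m hm N c j) by lia. apply Cmul_C0_l. }
 unfold Fsigma. replace (Mk m N + 2)%nat with (S (S (Mk m N))) at 2 by lia.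
 simpl Csum. rewrite Csum_C0 by (intros; apply HS; lia). rewrite HS by lia.
 unfold Spart at 1. simpl Csum. fold (Spart m (fm m N c) (Mk m N) x). rewrite HS by lia.
 rewrite !Cadd_C0_l. rewrite Cabs_scal, Cabs_mul, Cabs_psi.
 rewrite Rabs_pos_eq. unfold Rdiv; ring.
 apply Rlt_le, Rinv_0_lt_compat, lt_0_INR; lia.
Qed.

Lemma find_N m (hm : forall k, (2 <= m k)%nat) n0 : (3 <= n0)%nat ->
  exists N, (Mk m N + 2 <= n0)%nat /\ (n0 < Mk m (S N) + 2)%nat.
Proof. intros H3.
 assert (forall t, (n0 < Mk m t + 2)%nat -> exists N, (Mk m N + 2 <= n0)%nat /\ (n0 < Mk m (S N) + 2)%nat).
 { induction t; intros Ht. unfold Mk in Ht; simpl in Ht. lia.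
   destruct (lt_dec n0 (Mk m t + 2)). apply IHt; auto. exists t; split; lia. }
 apply (H n0). pose proof (Mk_ge m hm n0); lia. Qed.

Lemma cos_delta (a b : nat) : (2 <= a)%nat -> (a <= b)%nat ->
  cos (2 * PI / INR a) <= cos (2 * PI / INR b) /\ cos (2 * PI / INR b) < 1.
Proof. intros Ha Hb. pose proof PI_RGT_0.
 assert (INR a >= 2) by (replace 2 with (INR 2) by (simpl; ring); apply Rle_ge, le_INR; auto).
 assert (INR a <= INR b) by (apply le_INR; auto).
 assert (Hb2 : 2 * PI / INR b <= PI). { apply Rmult_le_reg_r with (INR b); [lra|].
   unfold Rdiv; rewrite Rmult_assoc, Rinv_l by lra. nra. }
 assert (Ha2 : 2 * PI / INR a <= PI). { apply Rmult_le_reg_r with (INR a); [lra|].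
   unfold Rdiv; rewrite Rmult_assoc, Rinv_l by lra. nra. }
 assert (Hb0 : 0 < 2 * PI / INR b) by (apply Rdiv_lt_0_compat; lra).
 assert (Hab : 2 * PI / INR b <= 2 * PI / INR a).
 { unfold Rdiv. apply Rmult_le_compat_l; [lra|]. apply Rinv_le_contravar; lra. }
 split.
 - destruct (Rle_lt_or_eq_dec _ _ Hab) as [Hl|He]. left. apply cos_decreasing_1; lra. rewrite He; lra.
 - rewrite <- cos_0. apply cos_decreasing_1; lra.
Qed.

Theorem theorem2 (m : nat -> nat) (p : R) (phi : nat -> R) :
  bounded_generating m ->
  0 < p < 1 / 2 ->
  (forall n, 1 <= phi n) ->
  (forall n1 n2, (n1 <= n2)%nat -> phi n1 <= phi n2) ->
  (* limsup (n+1)^{1/p-2} / phi n = +oo *)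
  (forall B : R, forall N : nat, exists n, (N <= n)%nat /\
       rpow (INR n + 1) (1 / p - 2) / phi n > B) ->
  (* sup_{||f||_{H_p} <= 1} sup_{n >= 1} || sigma_n f / phi n ||_{L_{p,oo}} = +oo *)
  forall B : R, 0 < B ->
    exists f : nat -> (nat -> nat) -> Cx,
      martingale m f /\ Hp_norm_le m p f 1 /\
      exists n : nat, (1 <= n)%nat /\
        weak_norm_gt m p n (fun x => Cabs (Fsigma m f n x) / phi n) B.
Proof.
 intros [hm [Bm HBm]] Hp Hphi Hmono Hlim B HB.
 set (al := 1 / p - 2).
 assert (Hal : 0 < al). { unfold al. assert (1 / p > 2). { apply Rmult_lt_reg_r with p; [lra|].
   unfold Rdiv; rewrite Rmult_assoc, Rinv_l by lra. lra. } lra. }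
 assert (HBm2 : (2 <= Bm)%nat) by (pose proof (hm 0%nat); pose proof (HBm 0%nat); lia).
 assert (HBmR : INR Bm >= 2) by (replace 2 with (INR 2) by (simpl; ring); apply Rle_ge, le_INR; auto).
 set (dl := 1 - cos (2 * PI / INR Bm)).
 assert (Hdl : 0 < dl) by (unfold dl; pose proof (cos_delta Bm Bm HBm2 (le_n _)); lra).
 set (Q := Rpower (INR Bm + 3) al).
 assert (HQ : 0 < Q) by (unfold Q, Rpower; apply exp_pos).
 set (Cst := 6 * B * INR Bm * Q / dl).
 destruct (Hlim Cst 3%nat) as [n0 [Hn0 Hn0']].
 destruct (find_N m hm n0 Hn0) as [N [HN1 HN2]].
 set (D := INR (Mk m N)).
 assert (HD : 1 <= D). { unfold D. replace 1 with (INR 1) by reflexivity. apply le_INR. apply (Mk_pos m hm). }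
 set (c := Rpower D (1 / p)).
 assert (Hc : 0 < c) by (unfold c, Rpower; apply exp_pos).
 assert (Hcp : rpow c p = D).
 { unfold rpow. destruct (Rle_dec c 0); [lra|]. unfold c. rewrite Rpower_mult.
   replace (1 / p * p) with 1 by (field; lra). apply Rpower_1; lra. }
 exists (fm m N c). split; [apply fm_mart; auto|]. split; [apply fm_Hp; auto|].
 exists (Mk m N + 2)%nat. split; [lia|].
 set (n := (Mk m N + 2)%nat).
 set (F := Cabs (fhat m (fm m N c) (Mk m N))).
 set (Ph := phi n).
 assert (HPh : 1 <= Ph) by apply Hphi.
 set (K0 := F / INR n / Ph).
 assert (HnR : INR n = D + 2) by (unfold n, D; rewrite plus_INR; simpl; ring).
 set (A := Rpower D al).
 assert (HA : 0 < A) by (unfold A, Rpower; apply exp_pos).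
 assert (HcA : c = A * D * D).
 { unfold c, A. replace (1 / p) with (al + INR 2) by (unfold al; simpl; ring).
   rewrite Rpower_plus, Rpower_pow by lra. simpl; ring. }
 set (R0 := rpow (INR n0 + 1) al).
 assert (HR0 : R0 <= Q * A).
 { unfold R0, rpow. destruct (Rle_dec (INR n0 + 1) 0). pose proof (pos_INR n0); lra.
   unfold Q, A. rewrite Rpower_mult_distr by lra. apply Rle_Rpower_l; [lra|]. split. pose proof (pos_INR n0); lra.
   assert (INR n0 + 1 <= INR (Mk m (S N)) + 2). { replace 2 with (INR 2) by (simpl; ring). rewrite <- S_INR, <- plus_INR. apply le_INR. lia. }
   rewrite Mk_S, mult_INR in H. fold D in H.
   assert (INR (m N) <= INR Bm) by (apply le_INR; auto). nra. }
 assert (HPh0 : Ph <= phi n0) by (apply Hmono; unfold n; lia).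
 assert (HAineq : A * dl > 6 * B * INR Bm * Ph).
 { assert (R0 > Cst * phi n0).
   { pose proof (Hphi n0). fold al R0 in Hn0'. apply Rmult_lt_reg_r with (/ phi n0). apply Rinv_0_lt_compat; lra.
     rewrite Rmult_assoc, Rinv_r by lra. unfold Rdiv in Hn0'. lra. }
   assert (Cst * phi n0 >= Cst * Ph). { apply Rle_ge, Rmult_le_compat_l; auto. unfold Cst. apply Rlt_le.
     apply Rdiv_lt_0_compat; [|lra]. repeat apply Rmult_lt_0_compat; lra. }
   assert (Q * A > Cst * Ph) by lra. unfold Cst in H1.
   apply Rmult_lt_reg_l with (Q / dl). apply Rdiv_lt_0_compat; lra.
   replace (Q / dl * (A * dl)) with (Q * A) by (field; lra).
   replace (Q / dl * (6 * B * INR Bm * Ph)) with (6 * B * INR Bm * Q / dl * Ph) by (field; lra). lra. }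
 assert (HF : F >= A * D * dl / INR Bm).
 { unfold F. pose proof (Cabs_ge_fst (fhat m (fm m N c) (Mk m N))). rewrite (fhat_MN m hm) in H.
   pose proof (cos_delta (m N) Bm (hm N) (HBm N)) as [Hc1 Hc2]. fold dl in Hc1.
   assert (HmN : INR (m N) <= INR Bm) by (apply le_INR; auto).
   assert (HmN2 : INR (m N) >= 2) by (replace 2 with (INR 2) by (simpl; ring); apply Rle_ge, le_INR; auto).
   fold D in H. set (X := fhat m (fm m N c) (Mk m N)) in *. rewrite HcA in H.
   assert (E : 0 <= A * D * D * (1 - cos (2 * PI / INR (m N))) / (INR (m N) * D)).
   { apply Rmult_le_pos. apply Rmult_le_pos. nra. lra. apply Rlt_le, Rinv_0_lt_compat. nra. }
   rewrite Rabs_pos_eq in H by auto.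
   replace (A * D * D * (1 - cos (2 * PI / INR (m N))) / (INR (m N) * D)) with
     (A * D * (1 - cos (2 * PI / INR (m N))) / INR (m N)) in H by (field; lra).
   apply Rle_ge. eapply Rle_trans; [|apply H].
   unfold Rdiv. apply Rmult_le_compat. nra. apply Rlt_le, Rinv_0_lt_compat; lra.
   apply Rmult_le_compat_l; [nra|]. unfold dl; unfold Rdiv in *; lra. apply Rinv_le_contravar; lra. }
 assert (HK0 : K0 > 2 * B).
 { unfold K0. rewrite HnR. apply Rmult_lt_reg_r with ((D + 2) * Ph). nra.
   replace (F / (D + 2) / Ph * ((D + 2) * Ph)) with F by (field; lra).
   assert (A * D * dl / INR Bm > 2 * B * ((D + 2) * Ph)).
   { apply Rmult_lt_reg_r with (INR Bm). lra. replace (A * D * dl / INR Bm * INR Bm) with (D * (A * dl)) by (field; lra).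
     assert (D * (A * dl) > D * (6 * B * INR Bm * Ph)) by (apply Rmult_lt_compat_l; lra).
     assert (2 * B * ((D + 2) * Ph) * INR Bm <= D * (6 * B * INR Bm * Ph)).
     { assert (0 <= B * Ph * INR Bm) by (repeat apply Rmult_le_pos; lra).
       replace (2 * B * ((D + 2) * Ph) * INR Bm) with ((D + 2) * (2 * (B * Ph * INR Bm))) by ring.
       replace (D * (6 * B * INR Bm * Ph)) with ((3 * D) * (2 * (B * Ph * INR Bm))) by ring.
       apply Rmult_le_compat_r; lra. }
     lra. }
   lra. }
 exists (K0 / 2). split. lra.
 assert (Hmu : mu_gt m n (fun x => Rabs (Cabs (Fsigma m (fm m N c) n x) / Ph)) (K0 / 2) = 1).
 { unfold mu_gt. rewrite (Rsum_ext _ _ (fun _ => 1)). rewrite Rsum_const. field.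
   apply not_0_INR. pose proof (Mk_pos m hm n); lia.
   intros i _. unfold n. rewrite Fsigma_val by auto. fold n F Ph.
   rewrite Rabs_pos_eq. fold K0. destruct (Rlt_dec (K0 / 2) K0) as [Hy|Hy]; [reflexivity| lra].
   unfold Rdiv. apply Rmult_le_pos. apply Rmult_le_pos. unfold F. unfold Cabs; apply sqrt_pos.
   apply Rlt_le, Rinv_0_lt_compat; lra. apply Rlt_le, Rinv_0_lt_compat; lra. }
 rewrite Hmu, Rmult_1_r. unfold rpow. destruct (Rle_dec (K0 / 2) 0); [lra|]. destruct (Rle_dec B 0); [lra|].
 apply Rlt_Rpower_l; lra.
Qed.
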